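(* Let $\gamma>0$ and $\varepsilon>0$. In the setting below, the algorithm PrivTree$(D,\lambda,\theta,\delta)$ with any $\theta\in\mathbb{R}$, with $\lambda\ge \frac{2e^{\gamma}-1}{e^{\gamma}-1}\cdot\frac{1}{\varepsilon}$ and $\delta=\gamma\lambda$, satisfies $\varepsilon$-differential privacy (with respect to its output tree, which contains no counts).
   Context: $\mathrm{Lap}(\lambda)$ is the Laplace distribution with density $\frac{1}{2\lambda}e^{-|y|/\lambda}$. Setting: $\Omega$ is a domain and there is a fixed, data-independent hierarchical splitting scheme of fanout $\beta\ge 2$: an infinite rooted tree of candidate nodes in which every node $v$ has exactly $\beta$ children, each node $v$ carries a sub-domain $\mathrm{dom}(v)\subseteq\Omega$, the root $v_1$ has $\mathrm{dom}(v_1)=\Omega$, and the sub-domains of the $\beta$ children of $v$ partition $\mathrm{dom}(v)$. $\mathrm{depth}(v)$ is the hop distance from $v$ to the root. A dataset $D$ is a finite multiset of points of $\Omega$; $c(v)$ is the number of points of $D$ lying in $\mathrm{dom}(v)$. PrivTree$(D,\lambda,\theta,\delta)$ (with $\lambda>0$, $\theta\in\mathbb{R}$, $\delta>0$): start with the tree consisting only of the root, marked unvisited. While some node $v$ is unvisited: mark $v$ visited; set $b(v)=\max\{\theta-\delta,\ c(v)-\mathrm{depth}(v)\cdot\delta\}$; set $\hat b(v)=b(v)+\eta_v$ where $\eta_v\sim\mathrm{Lap}(\lambda)$ is drawn freshly and independently; if $\hat b(v)>\theta$, add all $\beta$ children of $v$ to the tree as unvisited nodes. The output is the resulting tree (its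 set of nodes with their sub-domains), with all counts $c,b,\hat b$ removed. Two datasets are neighboring if one is obtained from the other by inserting one point. An algorithm $\mathcal{A}$ is $\varepsilon$-differentially private if for all neighboring $D,D'$ and every possible output $O$, $\ln\big(\Pr[\mathcal{A}(D)=O]/\Pr[\mathcal{A}(D')=O]\big)\le\varepsilon$. *)

(* Defs.v *)
From Stdlib Require Import Reals Lra List Permutation.
Import ListNotations.
Open Scope R_scope.

(* Candidate nodes of the infinite beta-ary tree: a node is the path of child
   indices from the root (root = []). depth v = length v. *)
Definition node := list nat.

Definition depth (v : node) : nat := length v.

(* CDF of Lap(lambda): Pr[eta <= x] for eta with density (1/(2 lambda)) e^{-|y|/lambda}. *)
Definition lap_cdf (lam x : R) : R :=
  if Rlt_dec x 0 then / 2 * exp (x / lam) else 1 - / 2 * exp (- x / lam).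

Definition cnt {T : Type} (dom : node -> T -> bool) (D : list T) (v : node) : nat :=
  length (filter (dom v) D).

Definition bval {T : Type} (dom : node -> T -> bool) (D : list T)
  (theta delta : R) (v : node) : R :=
  Rmax (theta - delta) (INR (cnt dom D v) - INR (depth v) * delta).

(* Pr[ b(v) + eta_v > theta ], eta_v ~ Lap(lambda) *)
Definition split_prob {T : Type} (dom : node -> T -> bool) (D : list T)
  (lam theta delta : R) (v : node) : R :=
  1 - lap_cdf lam (theta - bval dom D theta delta v).

(* A possible output of PrivTree: a finite full beta-ary subtree containing the
   root, given as a duplicate-free list of nodes. *)
Definition valid_output (beta : nat) (O : list node) : Prop :=
  NoDup O /\ In [] O /\
  (forall v, In v O -> forall i, In i v -> (i < beta)%nat) /\
  (forall u i, In (u ++ [i]) O -> In u O) /\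
  (forall v, In v O -> (exists i, In (v ++ [i]) O) ->
     forall i, (i < beta)%nat -> In (v ++ [i]) O).

Definition node_in (v : node) (O : list node) : bool :=
  existsb (fun w => if list_eq_dec Nat.eq_dec v w then true else false) O.

(* v was split in output O iff its children are in O *)
Definition is_split (O : list node) (v : node) : bool := node_in (v ++ [0%nat]) O.

(* Pr[PrivTree(D, lambda, theta, delta) = O] for a valid finite output O:
   each node of O is visited exactly once with fresh independent noise; it is
   split iff its children belong to O. *)
Definition privtree_prob {T : Type} (dom : node -> T -> bool) (D : list T)
  (lam theta delta : R) (O : list node) : R :=
  fold_right Rmult 1
    (map (fun v => if is_split O v then split_prob dom D lam theta delta v
                   else 1 - split_prob dom D lam theta delta v) O).

(* Fixed data-independent hierarchical splitting scheme of fanout beta. *)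
Definition splitting_scheme {T : Type} (beta : nat) (dom : node -> T -> bool) : Prop :=
  (2 <= beta)%nat /\
  (forall x, dom [] x = true) /\
  (forall v i x, dom (v ++ [i]) x = true -> dom v x = true) /\
  (forall v x, dom v x = true ->
     exists i, (i < beta)%nat /\ dom (v ++ [i]) x = true /\
       forall j, (j < beta)%nat -> dom (v ++ [j]) x = true -> j = i).

(* Main.v *)
Require Import Defs.
From Stdlib Require Import Reals Lra Lia List Permutation ZArith.
Import ListNotations.
Open Scope R_scope.


Lemma exp_le_mono x y : x <= y -> exp x <= exp y.
Proof. intros [H|H]. left; now apply exp_increasing. subst; lra. Qed.

Lemma ln_le_mono x y : 0 < x -> x <= y -> ln x <= ln y.
Proof. intros Hx [H|H]. left; now apply ln_increasing. subst; lra. Qed.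

Lemma ln_le_sub1 z : 0 < z -> ln z <= z - 1.
Proof. intros Hz. pose proof (exp_ineq1_le (ln z)). rewrite exp_ln in H; lra. Qed.

Section Lap.
Variable lam : R.
Hypothesis Hlam : 0 < lam.

Definition G (t : R) := ln (lap_cdf lam t).

Lemma exp_neg_le1 t : 0 <= t -> exp (- t / lam) <= 1.
Proof. intros. rewrite <- exp_0. apply exp_le_mono.
  unfold Rdiv. assert (0 <= t * / lam) by (apply Rmult_le_pos; [lra| left; now apply Rinv_0_lt_compat]). lra. Qed.

Lemma F_pos t : 0 < lap_cdf lam t.
Proof. unfold lap_cdf. destruct (Rlt_dec t 0).
  - pose proof (exp_pos (t/lam)); lra.
  - pose proof (exp_neg_le1 t). lra. Qed.

Lemma F_sym t : 1 - lap_cdf lam t = lap_cdf lam (- t).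
Proof. unfold lap_cdf. destruct (Rlt_dec t 0); destruct (Rlt_dec (-t) 0); try lra.
  all: try (rewrite Ropp_involutive; lra).
  all: try (assert (t = 0) by lra; subst; rewrite Ropp_0; unfold Rdiv; rewrite Rmult_0_l, Ropp_0, exp_0; lra).
  all: try (unfold Rdiv; rewrite Ropp_mult_distr_l; lra).
  assert (t = 0) by lra; subst. rewrite Ropp_involutive, Ropp_0. unfold Rdiv. rewrite Rmult_0_l, exp_0. lra. Qed.

Lemma F_mono x y : x <= y -> lap_cdf lam x <= lap_cdf lam y.
Proof. intros Hxy. unfold lap_cdf. destruct (Rlt_dec x 0); destruct (Rlt_dec y 0).
  - apply Rmult_le_compat_l; [lra|]. apply exp_le_mono. unfold Rdiv. apply Rmult_le_compat_r; [left; now apply Rinv_0_lt_compat| lra].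
  - pose proof (exp_neg_le1 y). assert (exp (x/lam) <= 1). { rewrite <- exp_0. apply exp_le_mono. unfold Rdiv. assert (0 < /lam) by (now apply Rinv_0_lt_compat). nra. } lra.
  - lra.
  - assert (exp (- y / lam) <= exp (- x / lam)); [|lra]. apply exp_le_mono. unfold Rdiv. assert (0 < /lam) by (now apply Rinv_0_lt_compat). nra. Qed.

Lemma G_mono x y : x <= y -> G x <= G y.
Proof. intros. unfold G. apply ln_le_mono. apply F_pos. now apply F_mono. Qed.

Lemma G_neg t : t < 0 -> G t = ln (/2) + t / lam.
Proof. intros. unfold G, lap_cdf. destruct (Rlt_dec t 0); [|lra].
  rewrite ln_mult; [|lra|apply exp_pos]. now rewrite ln_exp. Qed.

Lemma G_L2 c x y : 0 <= c -> c <= x -> x <= y -> G y - G x <= exp (- c / lam) * ((y - x) / lam).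
Proof. intros Hc Hcx Hxy. unfold G, lap_cdf.
  destruct (Rlt_dec x 0); [lra|]. destruct (Rlt_dec y 0); [lra|].
  set (A := 1 - / 2 * exp (- x / lam)). set (B := 1 - / 2 * exp (- y / lam)).
  pose proof (exp_neg_le1 x ltac:(lra)) as Ex.
  assert (HA : / 2 <= A) by (unfold A; lra).
  assert (HB : 0 < B) by (unfold B; pose proof (exp_neg_le1 y ltac:(lra)); lra).
  replace B with (A * (B / A)) by (field; lra).
  rewrite ln_mult; [| lra | apply Rdiv_lt_0_compat; lra].
  pose proof (ln_le_sub1 (B/A) ltac:(apply Rdiv_lt_0_compat; lra)) as L.
  assert (Hli : 0 < / lam) by (now apply Rinv_0_lt_compat).
  assert (Ey : exp (- y / lam) = exp (- x / lam) * exp (- ((y - x)/lam))).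
  { rewrite <- exp_plus. f_equal. field. lra. }
  pose proof (exp_ineq1_le (- ((y - x) / lam))) as E1.
  assert (Ec : exp (- x / lam) <= exp (- c / lam)).
  { apply exp_le_mono. unfold Rdiv. nra. }
  assert (Hyx : 0 <= (y - x) / lam) by (unfold Rdiv; nra).
  assert (B / A - 1 <= exp (- x / lam) - exp (- y / lam)).
  { unfold B. fold A. replace ((1 - / 2 * exp (- y / lam)) / A - 1) with ((/2) * (exp (- x / lam) - exp (- y/lam)) / A) by (unfold A; field; lra).
    assert (0 <= exp (- x / lam) - exp (- y / lam)).
    { rewrite Ey. pose proof (exp_pos (- x/lam)). assert (exp (- ((y - x) / lam)) <= 1). { rewrite <- exp_0; apply exp_le_mono; lra. } nra. }
    apply (Rmult_le_reg_r A); [lra|]. unfold Rdiv. rewrite Rmult_assoc, Rinv_l, Rmult_1_r by lra. nra. }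
  rewrite Ey in H. pose proof (exp_pos (- x / lam)). nra. Qed.

Lemma G_L1 x y : x <= y -> G y - G x <= (y - x) / lam.
Proof. intros Hxy.
  assert (Hli : 0 < / lam) by (now apply Rinv_0_lt_compat).
  destruct (Rlt_dec y 0).
  - rewrite !G_neg by lra. unfold Rdiv. lra.
  - destruct (Rlt_dec x 0).
    + pose proof (G_L2 0 0 y ltac:(lra) ltac:(lra) ltac:(lra)) as H2.
      unfold Rdiv in H2. rewrite Ropp_0, Rmult_0_l, exp_0 in H2.
      assert (G 0 = ln (/ 2)).
      { unfold G, lap_cdf. destruct (Rlt_dec 0 0); [lra|]. unfold Rdiv. rewrite Ropp_0, Rmult_0_l, exp_0. f_equal. lra. }
      rewrite (G_neg x) by lra. unfold Rdiv in *.
      assert ((y - x) * /lam = y*/lam - x*/lam) by ring. assert ((y-0)*/lam = y*/lam) by ring. lra.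
    + pose proof (G_L2 0 x y ltac:(lra) ltac:(lra) ltac:(lra)) as H2.
      unfold Rdiv in *. rewrite Ropp_0, Rmult_0_l, exp_0 in H2. lra. Qed.

End Lap.


Lemma Rdiv_le_0_compat a b : 0 <= a -> 0 < b -> 0 <= a / b.
Proof. intros. unfold Rdiv. apply Rmult_le_pos; [lra| left; now apply Rinv_0_lt_compat]. Qed.

Fixpoint sumf (f : nat -> R) (n : nat) : R :=
  match n with O => 0 | S m => sumf f m + f m end.

Lemma sumf_front f n : sumf f (S n) = f O + sumf (fun i => f (S i)) n.
Proof. induction n; simpl in *. lra. rewrite IHn. lra. Qed.

Lemma sumf_ext f g n : (forall i, (i < n)%nat -> f i = g i) -> sumf f n = sumf g n.
Proof. induction n; intros H; simpl. lra. rewrite IHn, H; auto. Qed.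

Lemma sumf_le f g n : (forall i, (i < n)%nat -> f i <= g i) -> sumf f n <= sumf g n.
Proof. induction n; intros H; simpl. lra. assert (f n <= g n) by auto. assert (sumf f n <= sumf g n) by auto. lra. Qed.

Lemma sumf_plus f g n : sumf (fun i => f i + g i) n = sumf f n + sumf g n.
Proof. induction n; simpl. lra. rewrite IHn. lra. Qed.

Lemma sumf_minus f g n : sumf (fun i => f i - g i) n = sumf f n - sumf g n.
Proof. induction n; simpl. lra. rewrite IHn. lra. Qed.

Lemma sumf_scal c f n : sumf (fun i => c * f i) n = c * sumf f n.
Proof. induction n; simpl. lra. rewrite IHn. lra. Qed.

Lemma sumf_swap (f : nat -> nat -> R) N J :
  sumf (fun i => sumf (fun j => f i j) J) N = sumf (fun j => sumf (fun i => f i j) N) J.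
Proof. induction N; simpl.
  - induction J; simpl; lra.
  - rewrite IHN. rewrite <- sumf_plus. reflexivity. Qed.

Ltac rmm := repeat match goal with
 | |- context [Rmin ?a ?b] => destruct (Rle_dec a b); [rewrite (Rmin_left a b) by lra | rewrite (Rmin_right a b) by lra]
 | |- context [Rmax ?a ?b] => destruct (Rle_dec a b); [rewrite (Rmax_right a b) by lra | rewrite (Rmax_left a b) by lra] end.

Definition clamp (w z : R) := Rmax 0 (Rmin z w).

Lemma clamp_swap d u : 0 < d -> clamp d u - clamp d (u - 1) = clamp 1 u - clamp 1 (u - d).
Proof. intros Hd. unfold clamp; rmm; lra. Qed.

Lemma clamp_mono w a b : a <= b -> clamp w a <= clamp w b.
Proof. intros. unfold clamp; rmm; lra. Qed.

Lemma clamp_le w a : 0 <= w -> clamp w a <= w.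
Proof. intros. unfold clamp; rmm; lra. Qed.

Lemma clamp_nonpos w a : a <= 0 -> clamp w a = 0.
Proof. intros. unfold clamp; rmm; lra. Qed.

Lemma clamp_big w a : 0 <= w -> w <= a -> clamp w a = w.
Proof. intros. unfold clamp; rmm; lra. Qed.

Lemma clamp_id w a : 0 <= a -> a <= w -> clamp w a = a.
Proof. intros. unfold clamp; rmm; lra. Qed.

Lemma telescope d : 0 < d -> forall N (u : nat -> R), (forall n, u (S n) <= u n - d) ->
  sumf (fun n => clamp 1 (u n) - clamp 1 (u n - d)) N <= clamp 1 (u O).
Proof. intros Hd N. induction N; intros u Hu.
  - simpl. unfold clamp. apply Rmax_l.
  - rewrite sumf_front. specialize (IHN (fun i => u (S i)) (fun n => Hu (S n))). simpl in IHN.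
    pose proof (clamp_mono 1 _ _ (Hu O)). lra. Qed.

Lemma gsum q : 0 <= q < 1 -> forall N (f : nat -> R), (forall j, 0 <= f j) ->
  (forall j, f (S j) <= q * f j) -> sumf f N <= f O / (1 - q).
Proof. intros Hq N. induction N; intros f H0 H1.
  - simpl. apply Rdiv_le_0_compat; [apply H0|lra].
  - rewrite sumf_front. specialize (IHN (fun i => f (S i)) (fun j => H0 (S j)) (fun j => H1 (S j))).
    simpl in IHN. pose proof (H1 O). pose proof (H0 O).
    assert (f 1%nat / (1 - q) <= q * f O / (1 - q)).
    { unfold Rdiv. apply Rmult_le_compat_r; [left; apply Rinv_0_lt_compat; lra| lra]. }
    assert (f O + q * f O / (1 - q) = f O / (1 - q)) by (field; lra). lra. Qed.

Lemma exists_J r : exists J : nat, r <= INR J.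
Proof. destruct (Rle_dec r 0). exists O. simpl. lra.
  destruct (archimed r) as [H1 _]. exists (Z.to_nat (up r)).
  assert (0 < up r)%Z. { apply lt_IZR. simpl. lra. }
  rewrite INR_IZR_INZ, Z2Nat.id by lia. lra. Qed.

Section Cells.
Variable lam d : R.
Hypothesis Hlam : 0 < lam.
Hypothesis Hd : 0 < d.

Definition cc (j : nat) := (INR j - 1) * d.
Definition kk (j : nat) := match j with O => / lam | _ => exp (- cc j / lam) / lam end.
Definition Psi (J : nat) (z : R) := sumf (fun j => kk j * clamp d (z - cc j)) J.

Lemma kk_pos j : 0 <= kk j.
Proof. destruct j; simpl. left; now apply Rinv_0_lt_compat.
  apply Rdiv_le_0_compat; [left; apply exp_pos | lra]. Qed.

Lemma Psi_flat J z : cc J <= z -> Psi J z = sumf (fun j => kk j * d) J.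
Proof. intros H. unfold Psi. apply sumf_ext. intros i Hi. f_equal. apply clamp_big; [lra|].
  unfold cc in *. assert (INR (S i) <= INR J) by (apply le_INR; lia). rewrite S_INR in H0. nra. Qed.

Lemma cell_bound j x y : cc j <= x -> x <= y -> y <= cc j + d -> G lam y - G lam x <= kk j * (y - x).
Proof. intros H1 H2 H3. destruct j.
  - simpl. pose proof (G_L1 lam Hlam x y H2). unfold Rdiv in H. lra.
  - assert (0 <= cc (S j)). { unfold cc. rewrite S_INR. pose proof (pos_INR j). nra. }
    pose proof (G_L2 lam Hlam (cc (S j)) x y H ltac:(lra) H2). unfold kk. unfold Rdiv in *. lra. Qed.

Lemma claimA J : forall x y, - d <= x -> x <= y -> y <= cc J -> G lam y - G lam x <= Psi J y - Psi J x.
Proof. induction J; intros x y Hx Hxy Hy.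
  - unfold cc in Hy. simpl in Hy. assert (x = y) by lra. subst. unfold Psi. simpl. lra.
  - assert (HcS : cc (S J) = cc J + d) by (unfold cc; rewrite S_INR; ring).
    assert (Ha : forall x y, - d <= x -> x <= y -> y <= cc J -> G lam y - G lam x <= Psi (S J) y - Psi (S J) x).
    { intros a b Ha Hab Hb. unfold Psi; simpl. fold (Psi J a) (Psi J b).
      rewrite (clamp_nonpos d (a - cc J)), (clamp_nonpos d (b - cc J)) by lra.
      pose proof (IHJ a b Ha Hab Hb). lra. }
    assert (Hb : forall x y, cc J <= x -> x <= y -> y <= cc J + d -> G lam y - G lam x <= Psi (S J) y - Psi (S J) x).
    { intros a b Ha' Hab Hb. unfold Psi; simpl. fold (Psi J a) (Psi J b).
      rewrite (Psi_flat J a), (Psi_flat J b) by lra.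
      rewrite (clamp_id d (a - cc J)), (clamp_id d (b - cc J)) by lra.
      pose proof (cell_bound J a b Ha' Hab Hb). lra. }
    rewrite HcS in Hy.
    destruct (Rle_dec y (cc J)). { apply Ha; lra. }
    destruct (Rle_dec (cc J) x). { apply Hb; lra. }
    pose proof (Ha x (cc J) Hx ltac:(lra) ltac:(lra)). pose proof (Hb (cc J) y ltac:(lra) ltac:(lra) ltac:(lra)). lra. Qed.

Lemma Psi_max J z : Psi J (Rmax (- d) z) = Psi J z.
Proof. unfold Psi. apply sumf_ext. intros i Hi. f_equal. unfold Rmax. destruct (Rle_dec (-d) z); auto.
  assert (0 <= INR i) by apply pos_INR. unfold cc.
  rewrite !clamp_nonpos; nra. Qed.

Lemma ksum J : sumf kk J <= / lam * (1 + 1 / (1 - exp (- d / lam))).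
Proof.
  assert (Hq1 : exp (- d / lam) < 1). { rewrite <- exp_0. apply exp_increasing. unfold Rdiv.
    assert (0 < d * / lam) by (apply Rmult_lt_0_compat; [lra| now apply Rinv_0_lt_compat]). lra. }
  assert (Hq0 : 0 < exp (- d / lam)) by apply exp_pos.
  assert (Hli : 0 < / lam) by (now apply Rinv_0_lt_compat).
  destruct J.
  - simpl. apply Rmult_le_pos; [lra|]. assert (0 < 1 / (1 - exp (- d / lam))) by (apply Rdiv_lt_0_compat; lra). lra.
  - rewrite sumf_front. simpl kk at 1.
    pose proof (gsum (exp (- d / lam)) ltac:(lra) J (fun i => kk (S i)) (fun j => kk_pos (S j))) as Hg.
    assert (Hk : forall j, kk (S j) = exp (- (INR j * d) / lam) / lam).
    { intros j. unfold kk, cc. rewrite S_INR. f_equal. f_equal. f_equal. f_equal. ring. }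
    assert (Hs : forall j, kk (S (S j)) <= exp (- d / lam) * kk (S j)).
    { intros j. rewrite !Hk. rewrite S_INR.
      assert (E : exp (- ((INR j + 1) * d) / lam) = exp (- d / lam) * exp (- (INR j * d) / lam))
        by (rewrite <- exp_plus; f_equal; field; lra).
      rewrite E. right. field. lra. }
    specialize (Hg Hs). cbv beta in Hg.
    assert (Hk1 : kk 1%nat = / lam). { rewrite Hk. simpl INR. replace (- (0 * d) / lam) with 0 by (field; lra). rewrite exp_0. field; lra. }
    rewrite Hk1 in Hg.
    assert (/ lam / (1 - exp (- d / lam)) = / lam * (1 / (1 - exp (- d / lam)))) by (field; lra).
    lra. Qed.

Lemma claimC N (T : nat -> R) : (forall n, T (S n) <= T n - d) ->
  sumf (fun n => G lam (Rmax (- d) (T n)) - G lam (Rmax (- d) (T n - 1))) N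
  <= / lam * (1 + 1 / (1 - exp (- d / lam))).
Proof. intros HT.
  destruct (exists_J (T O / d + 1)) as [J HJ].
  assert (HcJ : T O <= cc J). { unfold cc. apply (Rmult_le_compat_r d) in HJ; [|lra].
    unfold Rdiv in HJ. rewrite Rmult_plus_distr_r, Rmult_assoc, Rinv_l in HJ by lra. lra. }
  assert (Hmon : forall n, T n <= T O). { induction n. lra. pose proof (HT n). lra. }
  assert (HcJd : - d <= cc J). { unfold cc. pose proof (pos_INR J). nra. }
  apply Rle_trans with (sumf (fun n => Psi J (T n) - Psi J (T n - 1)) N).
  { apply sumf_le. intros n _. rewrite <- (Psi_max J (T n)), <- (Psi_max J (T n - 1)).
    apply claimA. apply Rmax_l. apply Rle_max_compat_l. lra.
    pose proof (Hmon n). unfold Rmax. destruct (Rle_dec (-d) (T n)); lra. }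
  apply Rle_trans with (sumf kk J); [| apply ksum].
  unfold Psi. erewrite sumf_ext.
  2:{ intros n _. rewrite <- sumf_minus. reflexivity. }
  erewrite sumf_ext.
  2:{ intros n _. apply sumf_ext. intros j _. rewrite <- Rmult_minus_distr_l. reflexivity. }
  rewrite sumf_swap.
  apply sumf_le. intros j _. rewrite sumf_scal.
  rewrite <- (Rmult_1_r (kk j)) at 2. apply Rmult_le_compat_l; [apply kk_pos|].
  erewrite sumf_ext.
  2:{ intros n _. replace (T n - 1 - cc j) with ((T n - cc j) - 1) by ring. rewrite clamp_swap by lra. reflexivity. }
  eapply Rle_trans. apply (telescope d Hd N (fun n => T n - cc j)). intros n. pose proof (HT n). lra.
  apply clamp_le. lra. Qed.

End Cells.

Local Open Scope bool_scope.

Definition lsum (h : node -> R) (l : list node) : R := fold_right (fun v acc => h v + acc) 0 l.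

Lemma lsum_le h h' l : (forall v, In v l -> h v <= h' v) -> lsum h l <= lsum h' l.
Proof. induction l; simpl; intros H. lra. pose proof (H a (or_introl eq_refl)).
  assert (lsum h l <= lsum h' l) by (apply IHl; auto). lra. Qed.

Lemma lsum_ext h h' l : (forall v, In v l -> h v = h' v) -> lsum h l = lsum h' l.
Proof. induction l; simpl; intros H. lra. rewrite (H a (or_introl eq_refl)), IHl; auto. Qed.

Lemma lsum_plus h h' l : lsum (fun v => h v + h' v) l = lsum h l + lsum h' l.
Proof. induction l; simpl. lra. rewrite IHl. lra. Qed.

Lemma lsum_zero (P : node -> bool) h l : (forall v, In v l -> P v = false) ->
  lsum (fun v => if P v then h v else 0) l = 0.
Proof. induction l; simpl; intros H. lra. rewrite H by auto. rewrite IHl by auto. lra. Qed.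

Lemma lsum_one (P : node -> bool) h l a : NoDup l -> (forall v, In v l -> P v = true -> v = a) -> 0 <= h a ->
  lsum (fun v => if P v then h v else 0) l <= h a.
Proof. induction l; simpl; intros Hn H Ha. lra.
  apply NoDup_cons_iff in Hn as [Hn1 Hn2].
  destruct (P a0) eqn:E.
  - assert (a0 = a) by auto. subst a0. rewrite lsum_zero. lra.
    intros v Hv. destruct (P v) eqn:E2; auto. exfalso. assert (v = a) by auto. subst; auto.
  - assert (lsum (fun v => if P v then h v else 0) l <= h a) by auto. lra. Qed.

Lemma lsum_uniq (P : node -> bool) c l : NoDup l ->
  (forall v w, In v l -> In w l -> P v = true -> P w = true -> v = w) -> 0 <= c ->
  lsum (fun v => if P v then c else 0) l <= c.
Proof. induction l; simpl; intros Hn H Hc. lra.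
  apply NoDup_cons_iff in Hn as [Hn1 Hn2].
  destruct (P a) eqn:E.
  - rewrite lsum_zero. lra.
    intros v Hv. destruct (P v) eqn:E2; auto. exfalso. assert (v = a) by (apply H; auto). subst; auto.
  - assert (lsum (fun v => if P v then c else 0) l <= c) by (apply IHl; auto). lra. Qed.

Lemma prod_pos (f : node -> R) l : (forall v, 0 < f v) -> 0 < fold_right Rmult 1 (map f l).
Proof. intros H. induction l; simpl. lra. apply Rmult_lt_0_compat; auto. Qed.

Lemma ln_prod (f : node -> R) l : (forall v, 0 < f v) -> ln (fold_right Rmult 1 (map f l)) = lsum (fun v => ln (f v)) l.
Proof. intros H. induction l; simpl. apply ln_1. rewrite ln_mult; auto. rewrite IHl. reflexivity. apply prod_pos; auto. Qed.

Lemma ln_ratio (f g : node -> R) l : (forall v, 0 < f v) -> (forall v, 0 < g v) ->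
  ln (fold_right Rmult 1 (map f l) / fold_right Rmult 1 (map g l)) = lsum (fun v => ln (f v) - ln (g v)) l.
Proof. intros Hf Hg. unfold Rdiv. rewrite ln_mult, ln_Rinv, !ln_prod; auto.
  2,3: apply prod_pos; auto. 2: apply Rinv_0_lt_compat; apply prod_pos; auto.
  clear. induction l; simpl. lra. rewrite <- IHl. lra. Qed.

Lemma perm_filter {A} (f : A -> bool) l l' : Permutation l l' -> Permutation (filter f l) (filter f l').
Proof. induction 1; simpl.
  - constructor.
  - destruct (f x); auto.
  - destruct (f x), (f y); auto. apply perm_swap.
  - eapply Permutation_trans; eauto. Qed.

Lemma cnt_perm {T} (dom : node -> T -> bool) l m y v : Permutation l (y :: m) ->
  cnt dom l v = (cnt dom m v + (if dom v y then 1 else 0))%nat.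
Proof. intros H. unfold cnt. rewrite (Permutation_length (perm_filter (dom v) _ _ H)). simpl.
  destruct (dom v y); simpl; lia. Qed.

Lemma cnt_sub {T} (dom : node -> T -> bool) l v w : (forall y, dom w y = true -> dom v y = true) ->
  (cnt dom l w <= cnt dom l v)%nat.
Proof. intros H. unfold cnt. induction l; simpl. lia.
  destruct (dom w a) eqn:E. rewrite (H a E). simpl. lia. destruct (dom v a); simpl; lia. Qed.

Lemma node_in_In v O : node_in v O = true <-> In v O.
Proof. unfold node_in. rewrite existsb_exists. split.
  - intros [w [Hw E]]. destruct (list_eq_dec Nat.eq_dec v w); [subst; auto| discriminate].
  - intros H. exists v. split; auto. destruct (list_eq_dec Nat.eq_dec v v); auto. Qed.

Section Path.
Variable T : Type.
Variable beta : nat.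
Variable dom : node -> T -> bool.
Variable x : T.
Variable Ot : list node.
Hypothesis Hs : splitting_scheme beta dom.
Hypothesis HO : valid_output beta Ot.

Definition idx (v : node) : nat :=
  match find (fun i => dom (v ++ [i]) x) (seq 0 beta) with Some i => i | None => 0%nat end.

Fixpoint pth (n : nat) : node := match n with 0%nat => [] | S m => pth m ++ [idx (pth m)] end.

Lemma idx_spec v : dom v x = true -> (idx v < beta)%nat /\ dom (v ++ [idx v]) x = true /\
  forall i, (i < beta)%nat -> dom (v ++ [i]) x = true -> i = idx v.
Proof. intros Hv. destruct Hs as [_ [_ [_ H4]]]. destruct (H4 v x Hv) as [i0 [Hi0 [Di0 U]]].
  unfold idx. destruct (find (fun i => dom (v ++ [i]) x) (seq 0 beta)) eqn:E.
  - apply find_some in E as [E1 E2]. apply in_seq in E1.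
    assert (n = i0) by (apply U; auto; lia). subst. split; [lia|]. split; auto.
  - exfalso. pose proof (find_none _ _ E i0). rewrite in_seq in H. rewrite H in Di0. discriminate. lia. Qed.

Lemma pth_dom n : dom (pth n) x = true.
Proof. induction n; simpl. destruct Hs as [_ [H _]]. apply H. apply idx_spec; auto. Qed.

Lemma pth_len n : length (pth n) = n.
Proof. induction n; simpl; auto. rewrite length_app. simpl. lia. Qed.

Lemma pth_char v : In v Ot -> dom v x = true -> v = pth (length v).
Proof. induction v using rev_ind; intros Hin Hd. reflexivity.
  destruct HO as [_ [_ [Hb [Hp _]]]]. destruct Hs as [_ [_ [Hm _]]].
  assert (Hu : In v Ot) by (eapply Hp; eauto).
  assert (Hdu : dom v x = true) by (eapply Hm; eauto).
  pose proof (IHv Hu Hdu) as E.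
  assert (x0 < beta)%nat by (apply (Hb _ Hin); apply in_or_app; right; simpl; auto).
  destruct (idx_spec v Hdu) as [_ [_ U]]. pose proof (U x0 H Hd). rewrite length_app. simpl.
  replace (length v + 1)%nat with (S (length v)) by lia. simpl. rewrite <- E. congruence. Qed.

Lemma pth_down m n : In (pth m) Ot -> (n <= m)%nat -> In (pth n) Ot.
Proof. induction m; intros H Hnm. replace n with 0%nat by lia. auto.
  destruct (Nat.eq_dec n (S m)). subst; auto.
  apply IHm; [|lia]. destruct HO as [_ [_ [_ [Hp _]]]]. simpl in H. eapply Hp; eauto. Qed.

Lemma pth_split n m : In (pth m) Ot -> (n < m)%nat -> is_split Ot (pth n) = true.
Proof. intros H Hnm. pose proof (pth_down m (S n) H Hnm). simpl in H0.
  destruct HO as [_ [_ [_ [_ Hf]]]]. destruct Hs as [Hb _].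
  apply node_in_In. apply (Hf (pth n)). eapply pth_down; eauto. lia.
  exists (idx (pth n)); auto. lia. Qed.

Lemma uniq_leaf v w : In v Ot -> In w Ot -> dom v x = true -> dom w x = true ->
  is_split Ot v = false -> is_split Ot w = false -> v = w.
Proof. intros Hv Hw Dv Dw Sv Sw. pose proof (pth_char v Hv Dv) as Ev. pose proof (pth_char w Hw Dw) as Ew.
  rewrite Ev in Sv, Hv. rewrite Ew in Sw, Hw. rewrite Ev, Ew.
  destruct (lt_eq_lt_dec (length v) (length w)) as [[Hl|Hl]|Hl].
  - rewrite (pth_split _ _ Hw Hl) in Sv. discriminate.
  - now rewrite Hl.
  - rewrite (pth_split _ _ Hv Hl) in Sw. discriminate. Qed.

Lemma reindex (h : node -> R) : (forall v, 0 <= h v) -> forall N, (forall v, In v Ot -> (length v < N)%nat) ->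
  lsum (fun v => if dom v x then h v else 0) Ot <= sumf (fun n => h (pth n)) N.
Proof. intros Hh N HN.
  assert (HND : NoDup Ot) by apply HO.
  assert (forall N, lsum (fun v => if dom v x && Nat.ltb (length v) N then h v else 0) Ot <= sumf (fun n => h (pth n)) N).
  { induction N0; simpl.
    - rewrite lsum_zero. lra. intros v _. destruct (dom v x); reflexivity.
    - rewrite (lsum_ext _ (fun v => (if dom v x && Nat.ltb (length v) N0 then h v else 0) +
                                    (if dom v x && Nat.eqb (length v) N0 then h v else 0))).
      + rewrite lsum_plus. assert (lsum (fun v => if dom v x && (length v =? N0)%nat then h v else 0) Ot <= h (pth N0)).
        { apply lsum_one; auto. intros v Hv E. apply Bool.andb_true_iff in E as [E1 E2]. apply Nat.eqb_eq in E2.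
          rewrite (pth_char v Hv E1). congruence. }
        lra.
      + intros v _. destruct (dom v x); [|simpl; lra].
        destruct (Nat.ltb_spec (length v) (S N0)), (Nat.ltb_spec (length v) N0), (Nat.eqb_spec (length v) N0);
        simpl; try lia; lra. }
  eapply Rle_trans; [|apply H]. right. apply lsum_ext. intros v Hv.
  assert (Nat.ltb (length v) N = true) by (apply Nat.ltb_lt; auto). rewrite H0, Bool.andb_true_r. reflexivity. Qed.

End Path.

Local Open Scope bool_scope.

Lemma factor_eq {T} (dom : node -> T -> bool) D lam theta delta v (s : bool) :
  (if s then split_prob dom D lam theta delta v else 1 - split_prob dom D lam theta delta v)
  = lap_cdf lam (if s then bval dom D theta delta v - theta else theta - bval dom D theta delta v).
Proof. unfold split_prob. destruct s.
  - rewrite F_sym. f_equal. ring.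
  - ring. Qed.

Lemma len_bound (l : list node) : forall v, In v l -> (length v < fold_right (fun v acc => acc + S (length v)) 0 l)%nat.
Proof. induction l as [|a l IH]; simpl; intros v H. contradiction. destruct H. subst; lia. specialize (IH v H). lia. Qed.

Lemma case1_node lam th a z (s : bool) : 0 < lam ->
  G lam (if s then Rmax a z - th else th - Rmax a z) - G lam (if s then Rmax a (z + 1) - th else th - Rmax a (z + 1))
  <= (if negb s then / lam else 0).
Proof. intros Hl. assert (Rmax a z <= Rmax a (z + 1)) by (apply Rle_max_compat_l; lra).
  destruct s; simpl.
  - pose proof (G_mono lam Hl (Rmax a z - th) (Rmax a (z + 1) - th) ltac:(lra)). lra.
  - pose proof (G_L1 lam Hl (th - Rmax a (z + 1)) (th - Rmax a z) ltac:(lra)).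
    assert (Rmax a (z + 1) - Rmax a z <= 1) by (rmm; lra).
    assert (0 < / lam) by (now apply Rinv_0_lt_compat).
    unfold Rdiv in H0. replace (th - Rmax a z - (th - Rmax a (z + 1))) with (Rmax a (z + 1) - Rmax a z) in H0 by ring.
    nra. Qed.

Lemma case2_node lam th dl z (s : bool) : 0 < lam ->
  G lam (if s then Rmax (th - dl) (z + 1) - th else th - Rmax (th - dl) (z + 1))
  - G lam (if s then Rmax (th - dl) z - th else th - Rmax (th - dl) z)
  <= G lam (Rmax (- dl) (z + 1 - th)) - G lam (Rmax (- dl) (z + 1 - th - 1)).
Proof. intros Hl.
  assert (E : forall w, Rmax (th - dl) w - th = Rmax (- dl) (w - th)) by (intros; rmm; lra).
  replace (z + 1 - th - 1) with (z - th) by ring.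
  assert (Rmax (th - dl) z <= Rmax (th - dl) (z + 1)) by (apply Rle_max_compat_l; lra).
  destruct s.
  - rewrite !E. lra.
  - pose proof (G_mono lam Hl (th - Rmax (th - dl) (z + 1)) (th - Rmax (th - dl) z) ltac:(lra)).
    pose proof (G_mono lam Hl (Rmax (- dl) (z - th)) (Rmax (- dl) (z + 1 - th)) ltac:(apply Rle_max_compat_l; lra)).
    lra. Qed.

Theorem theorem1 (T : Type) (beta : nat) (dom : node -> T -> bool)
  (gamma eps lam theta delta : R) :
  splitting_scheme beta dom ->
  0 < gamma -> 0 < eps ->
  lam >= (2 * exp gamma - 1) / (exp gamma - 1) * / eps ->
  delta = gamma * lam ->
  forall (D D' : list T) (x : T),
    (Permutation D' (x :: D) \/ Permutation D (x :: D')) ->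
    forall O : list node, valid_output beta O ->
      ln (privtree_prob dom D lam theta delta O /
          privtree_prob dom D' lam theta delta O) <= eps.
Proof.
  intros Hs Hg He Hl Hd D D' x Hperm O HO.
  assert (Eg : 1 < exp gamma) by (rewrite <- exp_0; apply exp_increasing; lra).
  set (C := (2 * exp gamma - 1) / (exp gamma - 1)) in *.
  assert (HC1 : 1 <= C). { unfold C. apply (Rmult_le_reg_r (exp gamma - 1)); [lra|].
    unfold Rdiv. rewrite Rmult_assoc, Rinv_l by lra. lra. }
  assert (Hie : 0 < / eps) by (now apply Rinv_0_lt_compat).
  assert (Hlam : 0 < lam) by nra.
  assert (Hli : 0 < / lam) by (now apply Rinv_0_lt_compat).
  assert (HCle : / lam * C <= eps).
  { apply (Rmult_le_reg_l lam); [lra|]. rewrite <- Rmult_assoc, Rinv_r, Rmult_1_l by lra.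
    apply (Rmult_le_reg_r (/ eps)); [lra|]. rewrite Rmult_assoc, Rinv_r by lra. lra. }
  assert (Hdl : 0 < delta) by (subst; nra).
  assert (HCeq : 1 + 1 / (1 - exp (- delta / lam)) = C).
  { replace (- delta / lam) with (- gamma) by (subst; field; lra). rewrite exp_Ropp. unfold C. field. lra. }
  unfold privtree_prob. rewrite ln_ratio.
  2,3: intros v; rewrite factor_eq; apply F_pos; auto.
  destruct Hperm as [Hp | Hp].
  -
    apply Rle_trans with (lsum (fun v => if dom v x && negb (is_split O v) then / lam else 0) O).
    + apply lsum_le. intros v Hv. rewrite !factor_eq. fold (G lam (if is_split O v then bval dom D theta delta v - theta else theta - bval dom D theta delta v)).
      fold (G lam (if is_split O v then bval dom D' theta delta v - theta else theta - bval dom D' theta delta v)).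
      unfold bval. rewrite (cnt_perm dom D' D x v Hp).
      destruct (dom v x).
      * rewrite plus_INR. simpl (INR 1).
        replace (INR (cnt dom D v) + 1 - INR (depth v) * delta) with ((INR (cnt dom D v) - INR (depth v) * delta) + 1) by ring.
        simpl andb. apply case1_node; auto.
      * rewrite Nat.add_0_r. simpl andb. lra.
    + apply Rle_trans with (/ lam); [| apply Rle_trans with (/ lam * C); [nra | auto]].
      apply lsum_uniq. apply HO. 2: lra.
      intros v w Hv Hw Pv Pw. apply Bool.andb_true_iff in Pv as [P1 P2]. apply Bool.andb_true_iff in Pw as [P3 P4].
      apply Bool.negb_true_iff in P2. apply Bool.negb_true_iff in P4.
      eapply uniq_leaf; eauto.
  -
    set (Dl := fun v => G lam (Rmax (- delta) (INR (cnt dom D v) - INR (depth v) * delta - theta))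
                       - G lam (Rmax (- delta) (INR (cnt dom D v) - INR (depth v) * delta - theta - 1))).
    assert (HDl : forall v, 0 <= Dl v).
    { intros v. unfold Dl. pose proof (G_mono lam Hlam (Rmax (- delta) (INR (cnt dom D v) - INR (depth v) * delta - theta - 1))
        (Rmax (- delta) (INR (cnt dom D v) - INR (depth v) * delta - theta)) ltac:(apply Rle_max_compat_l; lra)). lra. }
    apply Rle_trans with (lsum (fun v => if dom v x then Dl v else 0) O).
    + apply lsum_le. intros v Hv. rewrite !factor_eq. fold (G lam (if is_split O v then bval dom D theta delta v - theta else theta - bval dom D theta delta v)).
      fold (G lam (if is_split O v then bval dom D' theta delta v - theta else theta - bval dom D' theta delta v)).
      unfold bval, Dl. rewrite (cnt_perm dom D D' x v Hp).
      destruct (dom v x).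
      * rewrite plus_INR. simpl (INR 1).
        replace (INR (cnt dom D' v) + 1 - INR (depth v) * delta) with ((INR (cnt dom D' v) - INR (depth v) * delta) + 1) by ring.
        replace (INR (cnt dom D' v) - INR (depth v) * delta + 1 - theta) with ((INR (cnt dom D' v) - INR (depth v) * delta) + 1 - theta) by ring.
        apply case2_node; auto.
      * rewrite Nat.add_0_r. lra.
    + eapply Rle_trans. apply (reindex T beta dom x O Hs HO Dl HDl _ (len_bound O)).
      set (Tn := fun n => INR (cnt dom D (pth T beta dom x n)) - INR n * delta - theta).
      erewrite sumf_ext.
      2:{ intros n _. unfold Dl. unfold depth. rewrite pth_len. fold (Tn n). reflexivity. }
      eapply Rle_trans. apply (claimC lam delta Hlam Hdl _ Tn).
      * intros n. unfold Tn. simpl pth. rewrite S_INR.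
        assert (cnt dom D (pth T beta dom x n ++ [idx T beta dom x (pth T beta dom x n)]) <= cnt dom D (pth T beta dom x n))%nat.
        { apply cnt_sub. intros y. destruct Hs as [_ [_ [Hm _]]]. apply Hm. }
        apply le_INR in H. lra.
      * rewrite HCeq. auto.
Qed.
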